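(* Let $X$, $\Sigma$, $A$, $\#$, $X^\#$ and $A'$ be as follows: $X$ and $\Sigma$ are finite alphabets; $A$ is a finite automaton with state set $Q$, start state, final states, and edges labelled by pairs $(y, a)$ with $y \in \{\epsilon\} \cup X \cup \{x^{-1} : x \in X\}$ and $a \in \Sigma \cup \{\epsilon\}$; $\#$ is a new symbol not in $X$ and $X^\# = X \cup \{\#\}$; $A'$ has state set $Q_+ \cup Q_-$ (two disjoint copies $q_+, q_-$ of each $q \in Q$), start state $q_+$ for $q$ the start state of $A$, final states $q_-$ for $q$ final in $A$, an edge $p_+ \to q_+$ labelled $(x\#, a)$ whenever $A$ has an edge $p \to q$ labelled $(x,a)$ with $x \in X$, an edge $p_- \to q_+$ labelled $(x^{-1}\#, a)$ whenever $A$ has an edge $p \to q$ labelled $(x^{-1},a)$ with $x \in X$, an edge $p_+ \to q_+$ labelled $(\epsilon,a)$ whenever $A$ has an edge $p \to q$ labelled $(\epsilon, a)$, an edge $q_+ \to q_-$ labelled $(\epsilon,\epsilon)$ for each $q \in Q$, and a loop at $q_-$ labelled $(\#^{-1},\epsilon)$ for each $q \in Q$. Regard $A$ and $A'$ as ordinary finite automata over the free monoids $\overline{X}^* \times \Sigma^*$ and $(\overline{X^\#})^* \times \Sigma^*$ respectively. Then for $x \in (\overline{X^\#})^*$ and $w \in \Sigma^*$, the automaton $A'$ accepts $(x, w)$ if and only if there exists a word $y \in \overline{X}^*$ such that $x$ is a permissible padding of $y$ and $(y, w)$ is accepted by $A$.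
   Context: For an alphabet $Y$, $\overline{Y} = \{y, y^{-1} : y \in Y\}$, treated as an alphabet of formal symbols; letters of $Y$ are positive generators and letters $y^{-1}$ negative generators. A finite automaton over a monoid $N$ (edges labelled by elements of $N$) accepts an element $n \in N$ if some path from the start state to a final state has label (product of edge labels) $n$. Permissible padding: for $w = w_1 \cdots w_n$ with $w_i \in \overline{X}$, a permissible padding of $w$ is a word $x_1 x_2 \cdots x_n (\#^{-1})^k$ with $k \geq 0$, where $x_i = (\#^{-1})^{m_i} w_i \#$ for some $m_i \geq 0$ if $w_i$ is a negative generator, and $x_i = w_i \#$ if $w_i$ is a positive generator. *)

(* Defs.v *)
From mathcomp Require Import all_boot.
From Stdlib Require List.
Set Implicit Arguments. Unset Strict Implicit. Unset Printing Implicit Defensive.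

(* Formal symbols of \overline{Y}: y (Pos y) and y^{-1} (Neg y). *)
Inductive gen (Y : Type) : Type := Pos of Y | Neg of Y.
Arguments Pos {Y} _.
Arguments Neg {Y} _.

(* X^# = X ∪ {#}, realised as option X with None = #. *)
Definition hashsym {X : Type} : option X := None.

Definition ol {T : Type} (o : option T) : seq T :=
  if o is Some t then [:: t] else [::].

(* Paths in a finite automaton over the free monoid Y^* x S^*, whose edges
   (a finite list) are labelled by pairs of words.  [run E p q u v]: there is a
   path from p to q whose label (product of edge labels) is (u, v). *)
Inductive run {Q Y S : Type} (E : seq (Q * seq Y * seq S * Q)) :
    Q -> Q -> seq Y -> seq S -> Prop :=
| run_nil p : run E p p [::] [::]
| run_cons p u a r q u' v' :
    List.In (p, u, a, r) E -> run E r q u' v' -> run E p q (u ++ u') (a ++ v').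

Definition accepts {Q Y S : Type} (E : seq (Q * seq Y * seq S * Q))
  (q0 : Q) (F : Q -> bool) (u : seq Y) (v : seq S) : Prop :=
  exists q, F q /\ run E q0 q u v.

(* The automaton A: edges labelled (y, a), y in {eps} ∪ X ∪ X^{-1}, a in S ∪ {eps}. *)
Definition baseEdge {Q X S : Type} (e : Q * option (gen X) * option S * Q)
  : Q * seq (gen X) * seq S * Q :=
  let: (p, y, a, q) := e in (p, ol y, ol a, q).

Definition baseEdges {Q X S : Type} (E : seq (Q * option (gen X) * option S * Q)) :=
  map baseEdge E.

(* States of A': (true, q) = q_+, (false, q) = q_-. *)
Definition primeEdge {Q X S : Type} (e : Q * option (gen X) * option S * Q)
  : (bool * Q) * seq (gen (option X)) * seq S * (bool * Q) :=
  match e with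
  | (p, Some (Pos x), a, q) => ((true, p), [:: Pos (Some x); Pos hashsym], ol a, (true, q))
  | (p, Some (Neg x), a, q) => ((false, p), [:: Neg (Some x); Pos hashsym], ol a, (true, q))
  | (p, None, a, q) => ((true, p), [::], ol a, (true, q))
  end.

Definition primeEdges {Q : finType} {X S : Type}
  (E : seq (Q * option (gen X) * option S * Q))
  : seq ((bool * Q) * seq (gen (option X)) * seq S * (bool * Q)) :=
  map primeEdge E
  ++ [seq ((true, q), [::], [::], (false, q)) | q <- enum Q]
  ++ [seq ((false, q), [:: Neg hashsym], [::], (false, q)) | q <- enum Q].

Definition primeStart {Q : Type} (q0 : Q) : bool * Q := (true, q0).
Definition primeFinal {Q : Type} (F : Q -> bool) (s : bool * Q) : bool :=
  ~~ s.1 && F s.2.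

Definition pad_letter {X : Type} (m : nat) (g : gen X) : seq (gen (option X)) :=
  match g with
  | Pos x => [:: Pos (Some x); Pos hashsym]
  | Neg x => nseq m (Neg hashsym) ++ [:: Neg (Some x); Pos hashsym]
  end.

Definition permissible_padding {X : Type} (x : seq (gen (option X))) (y : seq (gen X)) : Prop :=
  exists (ms : seq nat) (k : nat),
    size ms = size y /\
    x = flatten [seq pad_letter mw.1 mw.2 | mw <- zip ms y] ++ nseq k (Neg hashsym).

(* Main.v *)
Require Import Defs.
From mathcomp Require Import all_boot.
From Stdlib Require List.

Definition pad {X : Type} (ms : seq nat) (y : seq (gen X)) (k : nat) : seq (gen (option X)) :=
  flatten [seq pad_letter mw.1 mw.2 | mw <- zip ms y] ++ nseq k (Neg hashsym).

Definition notpos {X : Type} (y : seq (gen X)) : Prop :=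
  if y is Pos _ :: _ then False else True.

Lemma In_mem (T : eqType) (x : T) (s : seq T) : x \in s -> List.In x s.
Proof.
elim: s => [|a s IH] //=; rewrite inE; case/orP => [/eqP ->|H]; [by left|by right; apply IH].
Qed.

Lemma run_app {Q Y S : Type} (E : seq (Q * seq Y * seq S * Q)) p q r u v u' v' :
  run E p q u v -> run E q r u' v' -> run E p r (u ++ u') (v ++ v').
Proof.
elim => [//|p0 u0 a0 r0 q0 u1 v1 Hin _ IH] H.
rewrite -!catA; exact: (run_cons Hin (IH H)).
Qed.

Lemma loops (X S Q : finType) (E : seq (Q * option (gen X) * option S * Q)) q k :
  run (primeEdges E) (false, q) (false, q) (nseq k (Neg hashsym)) [::].
Proof.
elim: k => [|k IH]; first exact: run_nil.
have Hin : List.In ((false, q), [:: Neg (@hashsym X)], [::] : seq S, (false, q)) (primeEdges E).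
  apply List.in_or_app; right; apply List.in_or_app; right.
  apply (List.in_map (fun q => ((false, q), [:: Neg (@hashsym X)], [::] : seq S, (false, q)))).
  by apply In_mem; rewrite mem_enum.
exact: (run_cons Hin IH).
Qed.

Lemma fwd (X S Q : finType) (E : seq (Q * option (gen X) * option S * Q)) s t u v :
  run (primeEdges E) s t u v -> exists y ms k, size ms = size y /\
    run (baseEdges E) s.2 t.2 y v /\ u = pad ms y k /\ (s.1 = false -> notpos y).
Proof.
elim => [p|p u0 a r q u' v' Hin _ [y [ms [k [Hs [Hr [Hu Hn]]]]]]].
  exists [::], [::], 0; do 2 split => //; exact: run_nil.
subst u'.
destruct (List.in_app_or _ _ _ Hin) as [Hin1|Hin1]; clear Hin; rename Hin1 into Hin.
  destruct (proj1 (List.in_map_iff _ _ _) Hin) as [[[[p0 y0] a0] q0] [Heq Hin2]].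
  have Hb := List.in_map baseEdge _ _ Hin2.
  clear Hin2; case: y0 Heq Hb => [[x|x]|] /= Heq Hb; case: Heq => ? ? ? ?; subst => /=.
  - exists (Pos x :: y), (0 :: ms), k; split; first by rewrite /= Hs.
    split; last by [].
    exact: (run_cons Hb Hr).
  - exists (Neg x :: y), (0 :: ms), k; split; first by rewrite /= Hs.
    split; last by [].
    exact: (run_cons Hb Hr).
  - exists y, ms, k; split => //; split => //.
    exact: (run_cons Hb Hr).
destruct (List.in_app_or _ _ _ Hin) as [Hin1|Hin1]; clear Hin; rename Hin1 into Hin.
  destruct (proj1 (List.in_map_iff _ _ _) Hin) as [q1 [Heq _]].
  case: Heq => ? ? ? ?; subst => /=.
  by exists y, ms, k.
destruct (proj1 (List.in_map_iff _ _ _) Hin) as [q1 [Heq _]].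
case: Heq => ? ? ? ?; subst => /=.
move: (Hn erefl) Hs Hr; clear Hn.
case: y => [|[x|x] y'] //= _.
  case: ms => [|//] _ Hr.
  exists [::], [::], k.+1; do 2 split => //.
case: ms => [//|m ms'] [Hs] Hr.
exists (Neg x :: y'), (m.+1 :: ms'), k; split; first by rewrite /= Hs.
by do 2 split => //.
Qed.

Lemma bwd (X S Q : finType) (E : seq (Q * option (gen X) * option S * Q)) p q y v :
  run (baseEdges E) p q y v -> forall ms k, size ms = size y ->
  run (primeEdges E) (true, p) (false, q) (pad ms y k) v.
Proof.
have Heps : forall q1, List.In ((true, q1), [::] : seq (gen (option X)), [::] : seq S, (false, q1)) (primeEdges E).
  move=> q1; apply List.in_or_app; right; apply List.in_or_app; left.
  apply (List.in_map (fun q => ((true, q), [::] : seq (gen (option X)), [::] : seq S, (false, q)))).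
  by apply In_mem; rewrite mem_enum.
elim => [p0|p0 u0 a r q0 u' v' Hin _ IH] ms k Hs.
  case: ms Hs => [|//] _.
  have := run_cons (Heps p0) (@loops _ _ _ E p0 k); by [].
destruct (proj1 (List.in_map_iff _ _ _) Hin) as [[[[p1 y0] a0] q1] [Heq Hin2]].
have Hp := List.in_or_app _ _ _ (or_introl (List.in_map primeEdge _ _ Hin2)) : List.In _ (primeEdges E).
clear Hin2 Hin; case: y0 Heq Hp => [[x|x]|] /= Heq Hp; case: Heq => ? ? ? ?; subst => /=.
- case: ms Hs => [//|m ms'] /= [Hs].
  exact: (run_cons Hp (IH ms' k Hs)).
- case: ms Hs => [//|m ms'] /= [Hs].
  have H1 := run_cons Hp (IH ms' k Hs).
  have H2 := @run_app _ _ _ _ _ _ _ _ _ _ _ (@loops _ _ _ E p0 m) H1.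
  have H3 := run_cons (Heps p0) H2.
  move: H3; rewrite /= /pad /= -!catA; by [].
- exact: (run_cons Hp (IH ms k Hs)).
Qed.

Theorem lemma4p5 (X S Q : finType) (q0 : Q) (F : pred Q)
  (E : seq (Q * option (gen X) * option S * Q))
  (x : seq (gen (option X))) (w : seq S) :
  accepts (primeEdges E) (primeStart q0) (primeFinal F) x w <->
  exists y : seq (gen X),
    permissible_padding x y /\ accepts (baseEdges E) q0 F y w.
Proof.
split.
  move=> [qf [Hf Hr]].
  have [y [ms [k [Hs [Hb [Hx _]]]]]] := @fwd _ _ _ E _ _ _ _ Hr.
  exists y; split; first by exists ms, k.
  exists qf.2; split => //.
  by case/andP: Hf.
move=> [y [[ms [k [Hs Hx]]] [qf [Hf Hr]]]].
exists (false, qf); split; first by rewrite /primeFinal /= Hf.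
rewrite Hx; exact: (@bwd _ _ _ E _ _ _ _ Hr ms k Hs).
Qed.
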